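(* Let $S\ge 3$ and let $n_1,\dots,n_S$ be nonnegative integers. Write $E=E(n_1,\dots,n_S)$ and let $E(n_j\pm1)$ denote $E(n_1,\dots,n_S)$ with only the $j$-th argument replaced by $n_j\pm1$ (a value with a negative argument is $0$). Then $$2(n_2-n_1)E=(n_1+1)E(n_1+1)+n_1E(n_1-1)-(n_2+1)E(n_2+1)-n_2E(n_2-1),$$ $$(n_1+1)E(n_1+1)=n_2E(n_2-1)+\dots+n_SE(n_S-1)+(n_2+\dots+n_S-n_1)E.$$
   Context: For nonnegative integers $n_1,\dots,n_S$, $E(n_1,\dots,n_S)$ denotes the number of block derangements: $S$ players hold $n_1,\dots,n_S$ distinct cards respectively; all $N=n_1+\dots+n_S$ cards are redealt so that player $j$ again receives exactly $n_j$ cards (only which cards each player gets matters); $E$ counts the deals in which no player receives any card he originally held. Equivalently, $E(n_1,\dots,n_S)$ is the coefficient of $x_1^{n_1}\cdots x_S^{n_S}$ in $\prod_{j=1}^S(x_1+\dots+x_S-x_j)^{n_j}$. By convention $E(0,\dots,0)=1$. *)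

(* Defs.v *)
From HB Require Import structures.
From mathcomp Require Import all_boot all_order all_algebra.
Set Implicit Arguments. Unset Strict Implicit. Unset Printing Implicit Defensive.

(* Cards: player j originally holds the cards (j, k) with k : 'I_(n j).
   A deal is a map f from cards to players; player j must receive exactly
   n j cards, and no card may go back to its original holder (tag c). *)
Definition card_t (S : nat) (n : 'I_S -> nat) : finType :=
  {j : 'I_S & 'I_(n j)}.

Definition E (S : nat) (n : 'I_S -> nat) : nat :=
  #|[pred f : {ffun card_t n -> 'I_S} |
      [forall c : card_t n, f c != tag c] &&
      [forall j : 'I_S, #|[pred c : card_t n | f c == j]| == n j]]|.

Definition upd (S : nat) (n : 'I_S -> nat) (j : 'I_S) (m : nat) : 'I_S -> nat :=
  fun i => if i == j then m else n i.

Definition Einc (S : nat) (n : 'I_S -> nat) (j : 'I_S) : nat :=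
  E (upd n j (n j).+1).

Definition Edec (S : nat) (n : 'I_S -> nat) (j : 'I_S) : nat :=
  if n j is m.+1 then E (upd n j m) else 0.

(* Main.v *)
Require Import Defs.
From HB Require Import structures.
From mathcomp Require Import all_boot all_order all_algebra fingroup perm zify ring.
Set Implicit Arguments. Unset Strict Implicit. Unset Printing Implicit Defensive.

Section Gen.
Variables (S : nat) (C : finType) (o : C -> 'I_S).

Definition okf (A : {set C}) (m : 'I_S -> nat) (f : {ffun C -> 'I_S}) : bool :=
  [forall c, if c \in A then f c != o c else f c == o c] &&
  [forall j, #|[pred x in A | f x == j]| == m j].

Definition G A m := #|[pred f | okf A m f]|.

Lemma G_ext A m m' : m =1 m' -> G A m = G A m'.
Proof.
move=> e; apply: eq_card => f; rewrite !inE /okf; congr (_ && _).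
by apply: eq_forallb => j; rewrite e.
Qed.

Lemma split_cnt (A : {set C}) (F : C -> 'I_S) c j : c \in A ->
  #|[pred x in A | F x == j]| = (F c == j) + #|[pred x in A :\ c | F x == j]|.
Proof.
move=> cA; rewrite (cardD1 c) inE /= cA /=; congr (_ + _).
by apply: eq_card => x; rewrite !inE /= andbA.
Qed.

Lemma cnt_eq (A : {set C}) (F F' : C -> 'I_S) j : {in A, F =1 F'} ->
  #|[pred x in A | F x == j]| = #|[pred x in A | F' x == j]|.
Proof.
move=> e; apply: eq_card => x; rewrite !inE /=.
by case xA: (x \in A) => //=; rewrite e.
Qed.

Lemma L (A : {set C}) m c k : c \in A ->
  #|[pred f | okf A m f && (f c == k)]| =
  if (k != o c) && (0 < m k)%N then G (A :\ c) (upd m k (m k).-1) else 0.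
Proof.
move=> cA.
case: (eqVneq k (o c)) => [ko|kno] /=.
  apply: eq_card0 => f; rewrite !inE /okf.
  apply/negP => /andP[/andP[/forallP/(_ c) + _] /eqP fck].
  by rewrite cA fck ko eqxx.
case: (posnP (m k)) => [mk0|mkp] /=.
  apply: eq_card0 => f; rewrite !inE /okf.
  case fck: (f c == k); rewrite ?andbF //= andbT.
  apply/negP => /andP[_ /forallP /(_ k)]; rewrite mk0 (split_cnt _ _ cA) fck.
  by [].
pose phi (g : {ffun C -> 'I_S}) := [ffun x => if x == c then k else g x].
have -> : G (A :\ c) (upd m k (m k).-1) = #|[set g | okf (A :\ c) (upd m k (m k).-1) g]|.
  by apply: eq_card => g; rewrite inE.
rewrite -(card_in_imset (f := phi) (D := [set g | okf (A :\ c) (upd m k (m k).-1) g])).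
  apply: eq_card => f; rewrite !inE; apply/idP/imsetP.
    case/andP=> /andP[/forallP ok1 /forallP ok2] fck.
    exists [ffun x => if x == c then o c else f x].
      rewrite inE /okf; apply/andP; split.
        apply/forallP => x; rewrite ffunE !inE.
        case: (eqVneq x c) => [-> | xc]; first by rewrite eqxx.
        by have := ok1 x.
      apply/forallP => j.
      rewrite (cnt_eq (F' := f)); last first.
        by move=> x; rewrite !inE ffunE; case: eqP.
      rewrite /upd; case: (eqVneq j k) => [->|jk].
        by rewrite -(eqP (ok2 k)) (split_cnt f k cA) fck.
      rewrite -(eqP (ok2 j)) (split_cnt f j cA) (_ : (f c == j) = false) //.
      by rewrite (eqP fck) eq_sym (negbTE jk).
    apply/ffunP => x; rewrite !ffunE; case: (eqVneq x c) => [->|//].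
    by rewrite (eqP fck).
  case=> g; rewrite inE => /andP[/forallP ok1 /forallP ok2] ->.
  apply/andP; split; last by rewrite /phi ffunE eqxx.
  rewrite /okf; apply/andP; split.
    apply/forallP => x; rewrite ffunE.
    case: (eqVneq x c) => [->|xc]; first by rewrite cA.
    by have := ok1 x; rewrite !inE xc.
  apply/forallP => j; rewrite (split_cnt _ _ cA) ffunE eqxx.
  rewrite (cnt_eq (F' := g)); last by move=> x; rewrite !inE ffunE; case: eqP.
  rewrite (eqP (ok2 j)) /upd; case: (eqVneq j k) => [->|jk].
    by rewrite add1n prednK.
  by rewrite add0n.
move=> g1 g2; rewrite !inE => /andP[/forallP o1 _] /andP[/forallP o2 _] e.
apply/ffunP => x; have := congr1 (fun f : {ffun C -> 'I_S} => f x) e; rewrite /phi !ffunE.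
case: (eqVneq x c) => [->|//] _.
have := o1 c; have := o2 c; rewrite !inE eqxx /= => /eqP -> /eqP -> //.
Qed.

Lemma cnt_sum (P Q : pred {ffun C -> 'I_S}) :
  #|[pred f | P f && Q f]| = \sum_(f | P f) (Q f : nat).
Proof.
rewrite -sum1_card (eq_bigl (fun f => P f && Q f)) //.
by rewrite big_mkcondr /=; apply: eq_bigr => f _; case: (Q f).
Qed.

Lemma cnt_sumC (A : {set C}) (F : C -> 'I_S) j :
  #|[pred x in A | F x == j]| = \sum_(x in A) (F x == j : nat).
Proof.
rewrite -sum1_card (eq_bigl (fun x => (x \in A) && (F x == j))) //.
by rewrite big_mkcondr /=; apply: eq_bigr => f _; case: (F f == j).
Qed.

Lemma Rlem A m c : G A m = \sum_k #|[pred f | okf A m f && (f c == k)]|.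
Proof.
rewrite /G -sum1_card (partition_big (fun f : {ffun C -> 'I_S} => f c) predT) //=.
apply: eq_bigr => k _; rewrite -sum1_card; apply: eq_bigl => f.
by rewrite !inE.
Qed.

Lemma Dlem (A : {set C}) m a : \sum_(c in A) #|[pred f | okf A m f && (f c == a)]| = m a * G A m.
Proof.
under eq_bigr do rewrite cnt_sum.
rewrite exchange_big /=.
transitivity (\sum_(f in [pred f | okf A m f]) m a); last first.
  by rewrite sum_nat_const mulnC.
apply: eq_big => // f /andP[_ /forallP /(_ a) /eqP <-].
by rewrite cnt_sumC.
Qed.
End Gen.

Section Transport.
Variables (S : nat) (C' C : finType) (o' : C' -> 'I_S) (o : C -> 'I_S).
Variables (h : C' -> C) (hinj : injective h) (ho : forall x, o (h x) = o' x).

Lemma cnt_img (A' : {set C'}) (F : C -> 'I_S) j :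
  #|[pred y in h @: A' | F y == j]| = #|[pred x in A' | F (h x) == j]|.
Proof.
rewrite -(card_imset [pred x in A' | F (h x) == j] hinj).
apply: eq_card => y; rewrite !inE /=; apply/andP/imsetP.
  by case=> /imsetP[x xA ->] Fj; exists x => //; rewrite inE /= xA.
by case=> x; rewrite inE => /andP[xA Fj] ->; rewrite imset_f.
Qed.

Lemma transport (A' : {set C'}) m : G o' A' m = G o (h @: A') m.
Proof.
pose Psi (F : {ffun C -> 'I_S}) : {ffun C' -> 'I_S} :=
  [ffun x => if x \in A' then F (h x) else o' x].
have hA x : (h x \in h @: A') = (x \in A').
  apply/imsetP/idP => [[y yA /hinj ->] //|xA]; by exists x.
have -> : G o (h @: A') m = #|[set F | okf o (h @: A') m F]|.
  by apply: eq_card => F; rewrite inE.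
rewrite -(card_in_imset (f := Psi)).
  apply: eq_card => f; rewrite !inE; apply/idP/imsetP.
    case/andP=> /forallP ok1 /forallP ok2.
    pose F := [ffun y => if [pick x in A' | h x == y] is Some x then f x else o y].
    have FhE x : x \in A' -> F (h x) = f x.
      move=> xA; rewrite ffunE; case: pickP => [x' /andP[_ /eqP /hinj -> //]|].
      by move/(_ x); rewrite xA eqxx.
    exists F; last first.
      apply/ffunP => x; rewrite ffunE; case xA: (x \in A'); first by rewrite FhE.
      by have := ok1 x; rewrite xA => /eqP.
    rewrite inE /okf; apply/andP; split.
      apply/forallP => y; case: (boolP (y \in h @: A')) => [/imsetP[x xA ->]|yA].
        by rewrite FhE // ho; have := ok1 x; rewrite xA.
      rewrite ffunE; case: pickP => [x /andP[xA /eqP hy]|_ //].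
      by rewrite -hy imset_f in yA.
    apply/forallP => j; rewrite cnt_img.
    rewrite -(eqP (ok2 j)); apply/eqP/cnt_eq => x xA; exact: FhE.
  case=> F; rewrite inE => /andP[/forallP ok1 /forallP ok2] ->.
  rewrite /okf; apply/andP; split.
    apply/forallP => x; rewrite ffunE; case xA: (x \in A') => //.
    by have := ok1 (h x); rewrite hA xA ho.
  apply/forallP => j; rewrite -(eqP (ok2 j)) cnt_img; apply/eqP/cnt_eq => x xA.
  by rewrite ffunE xA.
move=> F1 F2; rewrite !inE => /andP[/forallP o1 _] /andP[/forallP o2 _] e.
apply/ffunP => y; case: (boolP (y \in h @: A')) => [/imsetP[x xA ->]|yA].
  by have := congr1 (fun f : {ffun C' -> 'I_S} => f x) e; rewrite !ffunE xA.
by have := o1 y; have := o2 y; rewrite (negbTE yA) => /eqP -> /eqP ->.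
Qed.
End Transport.

Lemma E_G S (n' : 'I_S -> nat) : E n' = G (tag : card_t n' -> 'I_S) setT n'.
Proof.
apply: eq_card => f; rewrite !inE /okf; congr (_ && _).
  by apply: eq_forallb => c; rewrite inE.
by apply: eq_forallb => j; congr (_ == _); apply: eq_card => c; rewrite !inE.
Qed.

Section Main.
Variables (S : nat) (n : 'I_S -> nat) (a : 'I_S).
Definition N := upd n a (n a).+1.
Definition B (n' : 'I_S -> nat) : {set card_t N} := [set c | (val (tagged c) < n' (tag c))%N].

Lemma Emb n' (le : forall j, (n' j <= N j)%N) : E n' = G tag (B n') n'.
Proof.
pose h (c : card_t n') : card_t N :=
  Tagged (fun j => 'I_(N j)) (widen_ord (le (tag c)) (tagged c)).
rewrite E_G (transport (o := tag) (h := h)) //; last first.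
  case=> i k [i' k'] e; have ei : i = i' := congr1 tag e.
  subst i'; congr existT; apply: val_inj.
  by have := congr1 val (eq_from_Tagged e).
congr G; apply/setP => c; rewrite inE; apply/imsetP/idP.
  by case=> [[i k] _ ->] /=.
case: c => i k /= lt; exists (Tagged (fun j => 'I_(n' j)) (Ordinal lt)) => //.
  by rewrite in_setT.
rewrite /h /=; congr existT; exact: val_inj.
Qed.

Lemma NaE : N a = (n a).+1.
Proof. by rewrite /N /upd eqxx. Qed.

Lemma NE j : j != a -> N j = n j.
Proof. by rewrite /N /upd => /negbTE ->. Qed.

Lemma leN j : (n j <= N j)%N.
Proof. by rewrite /N /upd; case: eqP => // ->. Qed.

Lemma cardEq (y1 y2 : card_t N) :
  (y1 == y2) = (tag y1 == tag y2) && (val (tagged y1) == val (tagged y2)).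
Proof.
case: y1 y2 => i k [i' k'] /=; apply/eqP/andP => [e|[/eqP ei ek]].
  have ei : i = i' := congr1 tag e; subst i'; split => //.
  by rewrite (eq_from_Tagged e).
by subst i'; congr existT; apply/val_inj/eqP.
Qed.

Definition d : card_t N := Tagged (fun j => 'I_(N j)) (Ordinal (ltac:(by rewrite NaE) : (n a < N a)%N)).

Lemma inB n' c : (c \in B n') = (val (tagged c) < n' (tag c))%N.
Proof. by rewrite inE. Qed.

Lemma Bn_eq : B n = setT :\ d.
Proof.
apply/setP => -[i k]; rewrite inB !inE cardEq /=.
case: (eqVneq i a) => [e|ca] /=.
  subst i; have kle : (k <= n a)%N by rewrite -ltnS -NaE.
  by rewrite ltn_neqAle kle andbT.
by have : (k < n i)%N by rewrite -NE.
Qed.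

Lemma inBn c : tag c != a -> c \in B n.
Proof. by case: c => i k /= ca; rewrite inB /= -NE. Qed.

Lemma step1 : (n a).+1 * E N = \sum_(c : card_t N | tag c != a) G tag (setT :\ c) n.
Proof.
rewrite E_G -NaE -Dlem big_mkcond [RHS]big_mkcond; apply: eq_bigr => c _.
rewrite in_setT L ?in_setT // NaE /= eq_sym andbT.
case: ifP => // _; apply: G_ext => j; rewrite /upd /N.
by rewrite /upd; case: eqVneq => // ->.
Qed.

Lemma swap j m (c : card_t N) (hc : tag c = j) (ja : j != a) (hm : n j = m.+1) m' :
  G tag (B n :\ c) m' = G tag (B (upd n j m)) m'.
Proof.
case: c hc => i k /= hc; subst j.
have ltm : (m < N i)%N by rewrite NE // hm.
pose c : card_t N := Tagged (fun j => 'I_(N j)) k.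
pose cj : card_t N := Tagged (fun j => 'I_(N j)) (Ordinal ltm).
have tagT y : tag (tperm c cj y) = tag y.
  by case: tpermP => // ->.
rewrite (transport (o := tag) (h := tperm c cj)) //; last exact: perm_inj.
congr G; apply/setP => y.
rewrite -{1}(tpermK c cj y) mem_imset; last exact: perm_inj.
have cv : (k < m.+1)%N by rewrite -hm -(NE ja) ltn_ord.
case: tpermP => [->|->|yc ycj]; rewrite !inE !cardEq /= ?eqxx /=.
- rewrite /upd eqxx hm ltnSn /= andbT.
  by rewrite ltn_neqAle -ltnS cv andbT eq_sym.
- by rewrite /upd eqxx ltnn.
move: yc ycj; case: y => i' k' /= yc ycj.
have e1 := cardEq (existT _ i' k') c; rewrite /= in e1.
have e2 := cardEq (existT _ i' k') cj; rewrite /= in e2.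
rewrite -e1; move/eqP: yc => /negbTE -> /=.
rewrite /upd; case: (eqVneq i' i) => [e|ne] //; subst i'.
move/eqP: ycj; rewrite e2 eqxx /= => e3.
by rewrite hm ltnS leq_eqVlt (negbTE e3).
Qed.

Definition Qa (c : card_t N) :=
  if (0 < n a)%N then G tag (B n :\ c) (upd n a (n a).-1) else 0.

Lemma sumD1 (F : 'I_S -> nat) j : (\sum_(k | k != j) F k + F j = \sum_k F k)%N.
Proof. by rewrite [RHS](bigD1 j) //= addnC. Qed.

Lemma step2 c (ca : tag c != a) :
  (G tag (setT :\ c) n + Qa c = E n + Edec n (tag c))%N.
Proof.
have cB := inBn ca.
have dc : d != c by rewrite cardEq /= eq_sym (negbTE ca).
have dA : d \in setT :\ c by rewrite !inE dc.
pose Q k := if (0 < n k)%N then G tag (B n :\ c) (upd n k (n k).-1) else 0.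
have eS : (setT :\ c) :\ d = B n :\ c.
  by rewrite Bn_eq; apply/setP => x; rewrite !inE andbCA.
have h1 : G tag (setT :\ c) n = (\sum_(k | k != a) Q k)%N.
  rewrite (Rlem _ _ _ d) [RHS]big_mkcond; apply: eq_bigr => k _.
  by rewrite L //= eS /Q; case: (k != a).
have h2 : E n = (\sum_(k | k != tag c) Q k)%N.
  rewrite (Emb leN) (Rlem _ _ _ c) [RHS]big_mkcond; apply: eq_bigr => k _.
  by rewrite L // /Q; case: (k != tag c).
have h3 : Q (tag c) = Edec n (tag c).
  rewrite /Q /Edec; case e: (n (tag c)) => [|m].
    by rewrite inB e in cB.
  rewrite /= (swap (erefl (tag c)) ca e) -Emb // => j.
  rewrite /upd; case: eqVneq => [->|_]; last exact: leN.
  by apply: leq_trans (leN (tag c)); rewrite e.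
rewrite h1 h2 -h3 (_ : Qa c = Q a) // !sumD1 //.
Qed.

Lemma step3 : (\sum_(c : card_t N | tag c != a) Qa c = n a * E n)%N.
Proof.
rewrite /Qa; case: (posnP (n a)) => [->|na]; first by rewrite mul0n big1.
rewrite (Emb leN) -Dlem big_mkcond [RHS]big_mkcond; apply: eq_bigr => c _.
case: (boolP (c \in B n)) => cB; first by rewrite L // na andbT eq_sym.
case: ifP => // ca.
by rewrite inBn in cB.
Qed.

Lemma fiber j : #|[pred c : card_t N | tag c == j]| = N j.
Proof.
have inj : injective (Tagged (fun j => 'I_(N j)) : 'I_(N j) -> card_t N).
  by move=> x y e; exact: eq_from_Tagged e.
rewrite -[RHS]card_ord -cardsT -(card_imset _ inj).
apply: eq_card => -[i k]; rewrite !inE /=; apply/eqP/imsetP => [e|[x _ e]]; last exact: (congr1 tag e).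
by subst i; exists k.
Qed.

Lemma step4 (F : 'I_S -> nat) :
  (\sum_(c : card_t N | tag c != a) F (tag c) = \sum_(j | j != a) n j * F j)%N.
Proof.
rewrite (partition_big (fun c : card_t N => tag c) (fun j => j != a)) //=.
apply: eq_bigr => j ja.
rewrite (eq_bigr (fun _ => F j)); last by move=> c /andP[_ /eqP ->].
rewrite (eq_bigl (fun c => c \in [pred c : card_t N | tag c == j])); last first.
  by move=> c; rewrite inE; case: (eqVneq (tag c) j) => [->|]; rewrite ?andbF ?ja.
by rewrite sum_nat_const fiber NE.
Qed.

Lemma nat_final : ((n a).+1 * E N + n a * E n =
  \sum_(j | j != a) n j * E n + \sum_(j | j != a) n j * Edec n j)%N.
Proof.
rewrite step1 -step3 -big_split /=.
rewrite (eq_bigr (fun c => E n + Edec n (tag c)))%N; last by move=> c ca; exact: step2.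
by rewrite (step4 (fun j => E n + Edec n j)) -big_split /=; apply: eq_bigr => j _; rewrite mulnDr.
Qed.
End Main.
Unset Implicit Arguments.
Import GRing.Theory Num.Theory.
Local Open Scope ring_scope.

Lemma PoszSum S (P : pred 'I_S) (F : 'I_S -> nat) :
  Posz (\sum_(j | P j) F j)%N = \sum_(j | P j) (F j)%:Z.
Proof. by apply: (big_morph Posz PoszD). Qed.

Lemma intE2 S n (a : 'I_S) : ((n a).+1)%:Z * (Einc n a)%:Z =
  \sum_(j < S | j != a) (n j)%:Z * (Edec n j)%:Z
  + ((\sum_(j < S | j != a) (n j)%:Z) - (n a)%:Z) * (E n)%:Z.
Proof.
have := congr1 Posz (nat_final n a).
rewrite /Einc !PoszD !PoszM !(@PoszSum _ (fun j => j != a)).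
under eq_bigr do rewrite PoszM.
under [X in _ = _ + X -> _]eq_bigr do rewrite PoszM.
rewrite -mulr_suml mulrBl.
set X := _ * _; set Y := _ * _; set Z := _ * _; set W := \sum_(j < S | _) _.
rewrite intS mulrDl mul1r. change (E (upd n a (n a).+1)) with (E (N n a)).
by move=> H; rewrite -/X; lia.
Qed.


Lemma sumD1z S (F : 'I_S -> int) p :
  \sum_(j < S | j != p) F j = \sum_(j < S) F j - F p.
Proof. by rewrite [X in _ = X - _](bigD1 p) //= addrC addrK. Qed.

Theorem mainTheorem8 (S : nat) (hS : (3 <= S)%N) (n : 'I_S -> nat)
    (p1 p2 : 'I_S) (h1 : val p1 = 0%N) (h2 : val p2 = 1%N) :
  (2 * ((n p2)%:Z - (n p1)%:Z) * (E n)%:Z =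
     ((n p1).+1)%:Z * (Einc n p1)%:Z + (n p1)%:Z * (Edec n p1)%:Z
     - ((n p2).+1)%:Z * (Einc n p2)%:Z - (n p2)%:Z * (Edec n p2)%:Z)
  /\
  (((n p1).+1)%:Z * (Einc n p1)%:Z =
     \sum_(j < S | j != p1) (n j)%:Z * (Edec n j)%:Z
     + ((\sum_(j < S | j != p1) (n j)%:Z) - (n p1)%:Z) * (E n)%:Z).
Proof.
split; last exact: intE2.
rewrite (intE2 _ n p1) (intE2 _ n p2) !sumD1z.
ring.
Qed.
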